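(* Let $\phi\colon F_1\to F_2$ and $\psi\colon F_2\to F_3$ be transformations as below, dinatural in all their variables, and let $P,T$ be the places and transitions of $\Gamma(\psi)\circ\Gamma(\phi)$. Let $(M,L,f)$ be a labelled marking with $f\colon A\to B$, and let $t\in T$ be a transition with $M(p)=1$ for all $p\in{}^\bullet t$ and $L(t)=B$. Define $M'\colon P\to\{0,1\}$ by $M'(p)=0$ if $p\in{}^\bullet t$, $M'(p)=1$ if $p\in t^\bullet$, $M'(p)=M(p)$ otherwise, and $L'\colon T\to\{A,B\}$ by $L'(t)=A$, $L'(s)=L(s)$ for $s\ne t$. Then $(M',L',f)$ is a labelled marking and $\mathrm{mor}(M,L,f)=\mathrm{mor}(M',L',f)$.
   Context: Notation: for $k\in\mathbb N$, $k$ also denotes $\{1,\dots,k\}$; $\mathbb B^\alpha=\mathbb B^{\alpha_1}\times\cdots$ with $\mathbb B^+=\mathbb B$, $\mathbb B^-=\mathbb B^{op}$; for $\mathbf A=(A_1,\dots,A_n)$ and $\sigma\colon k\to n$, $\mathbf A\sigma=(A_{\sigma1},\dots,A_{\sigma k})$; a morphism $f\colon A\to B$ in a contravariant argument is regarded as $B\to A$ in $\mathbb B^{op}$. A transformation $\phi\colon F\to G$ ($F\colon\mathbb B^\alpha\to\mathbb C$, $G\colon\mathbb B^\beta\to\mathbb C$) of type $|\alpha|\xrightarrow{\sigma}n\xleftarrow{\tau}|\beta|$ is a family $\phi_{\mathbf A}\colon F(\mathbf A\sigma)\to G(\mathbf A\tau)$, $\mathbf A\in\mathrm{Ob}(\mathbb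 B)^n$. With $\mathbf A[X,Y/i]\sigma$ the tuple whose $j$-th entry is $X$ if $\sigma j=i,\alpha_j=-$, $Y$ if $\sigma j=i,\alpha_j=+$, and $A_{\sigma j}$ (or $1_{A_{\sigma j}}$ for morphisms) otherwise, and $\mathbf A[X/i]=\mathbf A[X,X/i]$: $\phi$ is dinatural in its $i$-th variable if for all $A_j$ ($j\ne i$) and $f\colon A\to B$, $G(\mathbf A[A,f/i]\tau)\circ\phi_{\mathbf A[A/i]}\circ F(\mathbf A[f,A/i]\sigma)=G(\mathbf A[f,B/i]\tau)\circ\phi_{\mathbf A[B/i]}\circ F(\mathbf A[B,f/i]\sigma)$. Setting: $F_u\colon\mathbb B^{\alpha^u}\to\mathbb C$ ($u=1,2,3$), $\phi$ of type $|\alpha^1|\xrightarrow{\sigma_1}k_1\xleftarrow{\tau_1}|\alpha^2|$, $\psi$ of type $|\alpha^2|\xrightarrow{\sigma_2}k_2\xleftarrow{\tau_2}|\alpha^3|$. The composite graph $\Gamma(\psi)\circ\Gamma(\phi)$ has places $P=|\alpha^1|\sqcup|\alpha^2|\sqcup|\alpha^3|$ (write $\iota_u(j)$ for place $j$ of block $u$) and transitions $T=k_1\sqcup k_2$ (write $\kappa_u(t)$ for $t\in k_u$); for $u\in\{1,2\}$: ${}^\bullet\kappa_u(t)=\{\iota_u(p):\sigma_u p=t,\alpha^u_p=+\}\cup\{\iota_{u+1}(p):\tau_u p=t,\alpha^{u+1}_p=-\}$ and $\kappa_u(t)^\bullet=\{\iota_u(p):\sigma_u p=t,\alpha^u_p=-\}\cup\{\iota_{u+1}(p):\tau_u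 p=t,\alpha^{u+1}_p=+\}$. For a place $p$, ${}^\bullet p$ and $p^\bullet$ are the sets of transitions having $p$ as output, resp. input; each has at most one element, and $p$ is adjacent to at least one transition. Labelled marking: a triple $(M,L,f)$ with $f\colon A\to B$ in $\mathbb B$, $M\colon P\to\{0,1\}$, $L\colon T\to\{A,B\}$ such that for every place $p$: if $M(p)=1$ then $L(s)=A$ for $s\in{}^\bullet p$ and $L(s)=B$ for $s\in p^\bullet$; if $M(p)=0$ then all transitions in ${}^\bullet p\cup p^\bullet$ have the same label. Associated morphism: $\mathrm{mor}(M,L,f)=F_3(x^3_1,\dots,x^3_{|\alpha^3|})\circ\psi_{X^2_1,\dots,X^2_{k_2}}\circ F_2(x^2_1,\dots,x^2_{|\alpha^2|})\circ\phi_{X^1_1,\dots,X^1_{k_1}}\circ F_1(x^1_1,\dots,x^1_{|\alpha^1|})$ in $\mathbb C$, where $x^u_j=f$ if $M(\iota_u(j))=1$ and $x^u_j=1_{L(s)}$ for $s$ any transition adjacent to $\iota_u(j)$ if $M(\iota_u(j))=0$, and $X^u_j=L(\kappa_u(j))$. *)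

(* Defs.v *)
From mathcomp Require Import all_boot.
Set Implicit Arguments. Unset Strict Implicit. Unset Printing Implicit Defensive.

(* Categories, presented "arrows-only": one type of all morphisms with  *)
(* domain/codomain maps; composition is a total operation whose laws    *)
(* are only required on composable pairs. [cmp g f] is g o f.           *)
Record Cat := {
  ob : Type;
  mor : Type;
  dom : mor -> ob;
  cod : mor -> ob;
  idm : ob -> mor;
  cmp : mor -> mor -> mor;
  dom_idm : forall a, dom (idm a) = a;
  cod_idm : forall a, cod (idm a) = a;
  dom_cmp : forall f g, cod f = dom g -> dom (cmp g f) = dom f;
  cod_cmp : forall f g, cod f = dom g -> cod (cmp g f) = cod g;
  cmp_idr : forall f, cmp f (idm (dom f)) = f;
  cmp_idl : forall f, cmp (idm (cod f)) f = f;
  cmp_assoc : forall f g h, cod f = dom g -> cod g = dom h ->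
    cmp h (cmp g f) = cmp (cmp h g) f
}.

(* Functor B^alpha -> C, alpha : 'I_n -> bool (true = +, false = -).
   A tuple of B-morphisms fs is regarded as a morphism of B^alpha: in a
   contravariant entry j, fs j : X -> Y in B is the arrow Y -> X of B^op. *)
Record mfunctor (B C : Cat) (n : nat) (alpha : 'I_n -> bool) := {
  fo : ('I_n -> ob B) -> ob C;
  fm : ('I_n -> mor B) -> mor C;
  fm_dom : forall fs,
    dom (fm fs) = fo (fun j => if alpha j then dom (fs j) else cod (fs j));
  fm_cod : forall fs,
    cod (fm fs) = fo (fun j => if alpha j then cod (fs j) else dom (fs j));
  fm_id : forall A : 'I_n -> ob B, fm (fun j => idm (A j)) = idm (fo A);
  fm_cmp : forall fs gs : 'I_n -> mor B,
    (forall j, if alpha j then cod (fs j) = dom (gs j)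
               else dom (fs j) = cod (gs j)) ->
    fm (fun j => if alpha j then cmp (gs j) (fs j) else cmp (fs j) (gs j))
    = cmp (fm gs) (fm fs)
}.

Record transf (B C : Cat) (n m k : nat) (alpha : 'I_n -> bool)
    (beta : 'I_m -> bool) (F : mfunctor B C alpha) (G : mfunctor B C beta)
    (sigma : 'I_n -> 'I_k) (tau : 'I_m -> 'I_k) := {
  tcomp :> ('I_k -> ob B) -> mor C;
  tcomp_dom : forall A, dom (tcomp A) = fo F (fun j => A (sigma j));
  tcomp_cod : forall A, cod (tcomp A) = fo G (fun j => A (tau j))
}.

Section Dinat.
Variables (B C : Cat) (n m k : nat) (alpha : 'I_n -> bool)
  (beta : 'I_m -> bool) (F : mfunctor B C alpha) (G : mfunctor B C beta)
  (sigma : 'I_n -> 'I_k) (tau : 'I_m -> 'I_k).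

(* A[X,Y/i]sigma as a tuple of morphisms (X,Y morphisms of B; an object
   Z in this position stands for idm Z). *)
Definition subst_mor (p : nat) (gamma : 'I_p -> bool) (rho : 'I_p -> 'I_k)
  (A : 'I_k -> ob B) (i : 'I_k) (X Y : mor B) : 'I_p -> mor B :=
  fun j => if rho j == i then (if gamma j then Y else X) else idm (A (rho j)).

Definition subst_ob (A : 'I_k -> ob B) (i : 'I_k) (X : ob B) : 'I_k -> ob B :=
  fun l => if l == i then X else A l.

Definition dinatural (phi : transf F G sigma tau) (i : 'I_k) : Prop :=
  forall (A : 'I_k -> ob B) (f : mor B),
    cmp (fm G (subst_mor beta tau A i (idm (dom f)) f))
      (cmp (phi (subst_ob A i (dom f)))
           (fm F (subst_mor alpha sigma A i f (idm (dom f)))))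
  = cmp (fm G (subst_mor beta tau A i f (idm (cod f))))
      (cmp (phi (subst_ob A i (cod f)))
           (fm F (subst_mor alpha sigma A i (idm (cod f)) f))).
End Dinat.

(* Places: inl j = iota_1 j, inr (inl j) = iota_2 j, inr (inr j) = iota_3 j. *)
(* Transitions: inl t = kappa_1 t, inr t = kappa_2 t.                    *)
Definition place (n1 n2 n3 : nat) := ('I_n1 + ('I_n2 + 'I_n3))%type.
Definition transition (k1 k2 : nat) := ('I_k1 + 'I_k2)%type.

Inductive lab := LA | LB.

Section Graph.
Variables (n1 n2 n3 k1 k2 : nat)
  (a1 : 'I_n1 -> bool) (a2 : 'I_n2 -> bool) (a3 : 'I_n3 -> bool)
  (s1 : 'I_n1 -> 'I_k1) (t1 : 'I_n2 -> 'I_k1)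
  (s2 : 'I_n2 -> 'I_k2) (t2 : 'I_n3 -> 'I_k2).

Definition is_input (p : place n1 n2 n3) (t : transition k1 k2) : bool :=
  match t, p with
  | inl t, inl j => (s1 j == t) && a1 j
  | inl t, inr (inl j) => (t1 j == t) && ~~ a2 j
  | inr t, inr (inl j) => (s2 j == t) && a2 j
  | inr t, inr (inr j) => (t2 j == t) && ~~ a3 j
  | _, _ => false
  end.

Definition is_output (p : place n1 n2 n3) (t : transition k1 k2) : bool :=
  match t, p with
  | inl t, inl j => (s1 j == t) && ~~ a1 j
  | inl t, inr (inl j) => (t1 j == t) && a2 j
  | inr t, inr (inl j) => (s2 j == t) && ~~ a2 j
  | inr t, inr (inr j) => (t2 j == t) && a3 j
  | _, _ => false
  end.

(* {}^\bullet p = [set s | is_output p s],  p^\bullet = [set s | is_input p s].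
   M p = true means M(p) = 1. *)
Definition labelled_marking (M : place n1 n2 n3 -> bool)
    (L : transition k1 k2 -> lab) : Prop :=
  forall p,
    if M p then
      (forall s, is_output p s -> L s = LA) /\
      (forall s, is_input p s -> L s = LB)
    else
      forall s s', is_input p s || is_output p s ->
                   is_input p s' || is_output p s' -> L s = L s'.

Definition fire_marking (M : place n1 n2 n3 -> bool) (t : transition k1 k2)
    : place n1 n2 n3 -> bool :=
  fun p => if is_input p t then false else if is_output p t then true else M p.

Definition fire_label (L : transition k1 k2 -> lab) (t : transition k1 k2)
    : transition k1 k2 -> lab :=
  fun s => if s == t then LA else L s.

Section Mor.
Variables (B C : Cat)
  (F1 : mfunctor B C a1) (F2 : mfunctor B C a2) (F3 : mfunctor B C a3)
  (phi : transf F1 F2 s1 t1) (psi : transf F2 F3 s2 t2).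

Definition labobj (f : mor B) (l : lab) : ob B :=
  match l with LA => dom f | LB => cod f end.

Definition mor_of (M : place n1 n2 n3 -> bool) (L : transition k1 k2 -> lab)
    (f : mor B) : mor C :=
  let x1 := fun j : 'I_n1 =>
    if M (inl j) then f else idm (labobj f (L (inl (s1 j)))) in
  let x2 := fun j : 'I_n2 =>
    if M (inr (inl j)) then f else idm (labobj f (L (inl (t1 j)))) in
  let x3 := fun j : 'I_n3 =>
    if M (inr (inr j)) then f else idm (labobj f (L (inr (t2 j)))) in
  let X1 := fun i : 'I_k1 => labobj f (L (inl i)) in
  let X2 := fun i : 'I_k2 => labobj f (L (inr i)) in
  cmp (fm F3 x3) (cmp (psi X2) (cmp (fm F2 x2) (cmp (phi X1) (fm F1 x1)))).
End Mor.
End Graph.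

(* Main.v *)
Require Import Defs.
From mathcomp Require Import all_boot.
From Stdlib Require Import FunctionalExtensionality.
Set Implicit Arguments. Unset Strict Implicit. Unset Printing Implicit Defensive.

Section Gen.
Variable (B : Cat).
Lemma cmp_idl' (g : mor B) a : cod g = a -> cmp (idm a) g = g.
Proof. by move=> <-; rewrite cmp_idl. Qed.
Lemma cmp_idr' (g : mor B) a : dom g = a -> cmp g (idm a) = g.
Proof. by move=> <-; rewrite cmp_idr. Qed.
Lemma idm_idm (a : ob B) : cmp (idm a) (idm a) = idm a.
Proof. by apply: cmp_idl'; rewrite cod_idm. Qed.
Lemma assoc5 (w1 g1 T g2 w2 : mor B) :
  cod w1 = dom g1 -> cod g1 = dom T -> cod T = dom g2 -> cod g2 = dom w2 ->
  cmp (cmp w2 g2) (cmp T (cmp g1 w1)) = cmp w2 (cmp (cmp g2 (cmp T g1)) w1).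
Proof.
move=> h1 h2 h3 h4.
rewrite -cmp_assoc //; last by rewrite cod_cmp // cod_cmp.
rewrite (cmp_assoc h1) //.
rewrite (@cmp_assoc _ w1 (cmp T g1) g2) //; first by rewrite dom_cmp.
by rewrite cod_cmp.
Qed.
End Gen.

Section DS.
Variables (B C : Cat) (n m k : nat) (alpha : 'I_n -> bool)
  (beta : 'I_m -> bool) (F : mfunctor B C alpha) (G : mfunctor B C beta)
  (sigma : 'I_n -> 'I_k) (tau : 'I_m -> 'I_k) (th : transf F G sigma tau).

Lemma split_fm p (gam : 'I_p -> bool) (H : mfunctor B C gam) (x w g : 'I_p -> mor B) :
 (forall j, if gam j then cod (w j) = dom (g j) else dom (w j) = cod (g j)) ->
 (forall j, x j = if gam j then cmp (g j) (w j) else cmp (w j) (g j)) ->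
 fm H x = cmp (fm H g) (fm H w).
Proof.
move=> H1 H2; rewrite -fm_cmp //; congr fm.
by apply: functional_extensionality => j; exact: H2.
Qed.

Lemma cod_dom_fm p (gam : 'I_p -> bool) (H : mfunctor B C gam) (w g : 'I_p -> mor B) :
 (forall j, if gam j then cod (w j) = dom (g j) else dom (w j) = cod (g j)) ->
 cod (fm H w) = dom (fm H g).
Proof.
move=> H1; rewrite fm_cod fm_dom; congr fo.
apply: functional_extensionality => j; move: (H1 j); by case: (gam j).
Qed.

Lemma dinat_step i (Hd : dinatural th i) (A : 'I_k -> ob B) (f : mor B)
  (x x' : 'I_n -> mor B) (y y' : 'I_m -> mor B) :
 A i = cod f ->
 (forall j, (if alpha j then cod (x j) else dom (x j)) = A (sigma j)) ->
 (forall j, (if beta j then dom (y j) else cod (y j)) = A (tau j)) ->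
 (forall j, sigma j != i -> x' j = x j) ->
 (forall j, tau j != i -> y' j = y j) ->
 (forall j, sigma j = i -> x j = (if alpha j then f else idm (cod f)) /\
                           x' j = (if alpha j then idm (dom f) else f)) ->
 (forall j, tau j = i -> y j = (if beta j then idm (cod f) else f) /\
                         y' j = (if beta j then f else idm (dom f))) ->
 cmp (fm G y) (cmp (th A) (fm F x))
 = cmp (fm G y') (cmp (th (subst_ob A i (dom f))) (fm F x')).
Proof.
move=> HAi Hx Hy Hx' Hy' Hxi Hyi.
set wx := fun j => if sigma j == i then idm (if alpha j then dom f else cod f) else x j.
set wy := fun j => if tau j == i then idm (if beta j then cod f else dom f) else y j.
set gx := subst_mor alpha sigma A i (idm (cod f)) f.
set gx' := subst_mor alpha sigma A i f (idm (dom f)).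
set gy := subst_mor beta tau A i f (idm (cod f)).
set gy' := subst_mor beta tau A i (idm (dom f)) f.
set A' := subst_ob A i (dom f).
have EA : subst_ob A i (cod f) = A.
  apply: functional_extensionality => l; rewrite /subst_ob.
  by case: eqP => // ->.
have Dd := Hd A f; rewrite EA -/gx -/gx' -/gy -/gy' -/A' in Dd.
have Cx : forall j, if alpha j then cod (wx j) = dom (gx j) else dom (wx j) = cod (gx j).
  move=> j; rewrite /wx /gx /subst_mor; case: eqP => [E|NE];
  move: (Hx j); case: (alpha j) => h; by rewrite ?cod_idm ?dom_idm.
have Cx' : forall j, if alpha j then cod (wx j) = dom (gx' j) else dom (wx j) = cod (gx' j).
  move=> j; rewrite /wx /gx' /subst_mor; case: eqP => [E|NE];
  move: (Hx j); case: (alpha j) => h; by rewrite ?cod_idm ?dom_idm.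
have Cy : forall j, if beta j then cod (gy j) = dom (wy j) else dom (gy j) = cod (wy j).
  move=> j; rewrite /wy /gy /subst_mor; case: eqP => [E|NE];
  move: (Hy j); case: (beta j) => h; by rewrite ?cod_idm ?dom_idm.
have Cy' : forall j, if beta j then cod (gy' j) = dom (wy j) else dom (gy' j) = cod (wy j).
  move=> j; rewrite /wy /gy' /subst_mor; case: eqP => [E|NE];
  move: (Hy j); case: (beta j) => h; by rewrite ?cod_idm ?dom_idm.
have Sx : fm F x = cmp (fm F gx) (fm F wx).
  apply: split_fm => // j; rewrite /wx /gx /subst_mor; case: eqP => [E|NE].
    have [-> _] := Hxi j E; case: (alpha j); first by rewrite cmp_idr.
    by rewrite idm_idm.
  move: (Hx j); case: (alpha j) => h; [exact/esym/cmp_idl'|exact/esym/cmp_idr'].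
have Sx' : fm F x' = cmp (fm F gx') (fm F wx).
  apply: split_fm => // j; rewrite /wx /gx' /subst_mor; case: eqP => [E|NE].
    have [_ ->] := Hxi j E; case: (alpha j); first by rewrite idm_idm.
    by rewrite cmp_idl.
  rewrite Hx'; last by apply/eqP.
  move: (Hx j); case: (alpha j) => h; [exact/esym/cmp_idl'|exact/esym/cmp_idr'].
have Sy : fm G y = cmp (fm G wy) (fm G gy).
  apply: split_fm => // j; rewrite /wy /gy /subst_mor; case: eqP => [E|NE].
    have [-> _] := Hyi j E; case: (beta j); first by rewrite idm_idm.
    by rewrite cmp_idr.
  move: (Hy j); case: (beta j) => h; [exact/esym/cmp_idr'|exact/esym/cmp_idl'].
have Sy' : fm G y' = cmp (fm G wy) (fm G gy').
  apply: split_fm => // j; rewrite /wy /gy' /subst_mor; case: eqP => [E|NE].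
    have [_ ->] := Hyi j E; case: (beta j); first by rewrite cmp_idl.
    by rewrite idm_idm.
  rewrite Hy'; last by apply/eqP.
  move: (Hy j); case: (beta j) => h; [exact/esym/cmp_idr'|exact/esym/cmp_idl'].
have K1 : cod (fm F gx) = dom (th A).
  rewrite fm_cod tcomp_dom; congr fo; apply: functional_extensionality => j.
  rewrite /gx /subst_mor; case: eqP => [->|_]; case: (alpha j);
  by rewrite ?cod_idm ?dom_idm.
have K2 : cod (th A) = dom (fm G gy).
  rewrite fm_dom tcomp_cod; congr fo; apply: functional_extensionality => j.
  rewrite /gy /subst_mor; case: eqP => [->|_]; case: (beta j);
  by rewrite ?cod_idm ?dom_idm.
have K1' : cod (fm F gx') = dom (th A').
  rewrite fm_cod tcomp_dom; congr fo; apply: functional_extensionality => j.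
  rewrite /gx' /A' /subst_mor /subst_ob; case: eqP => [E|_];
  case: (alpha j); by rewrite ?cod_idm ?dom_idm.
have K2' : cod (th A') = dom (fm G gy').
  rewrite fm_dom tcomp_cod; congr fo; apply: functional_extensionality => j.
  rewrite /gy' /A' /subst_mor /subst_ob; case: eqP => [E|_];
  case: (beta j); by rewrite ?cod_idm ?dom_idm.
rewrite Sx Sx' Sy Sy' !assoc5 //; try exact: cod_dom_fm.
by rewrite Dd.
Qed.
End DS.

Lemma inl_eq (T U : eqType) (a b : T) : (inl a == inl b :> T + U) = (a == b).
Proof. by []. Qed.
Lemma inr_eq (T U : eqType) (a b : U) : (inr a == inr b :> T + U) = (a == b).
Proof. by []. Qed.
Lemma inlr_eq (T U : eqType) (a : T) (b : U) : (inl a == inr b :> T + U) = false.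
Proof. by []. Qed.
Lemma inrl_eq (T U : eqType) (a : T) (b : U) : (inr b == inl a :> T + U) = false.
Proof. by []. Qed.

Section G2.
Variables (B C : Cat) (n1 n2 n3 k1 k2 : nat)
  (a1 : 'I_n1 -> bool) (a2 : 'I_n2 -> bool) (a3 : 'I_n3 -> bool)
  (F1 : mfunctor B C a1) (F2 : mfunctor B C a2) (F3 : mfunctor B C a3)
  (s1 : 'I_n1 -> 'I_k1) (t1 : 'I_n2 -> 'I_k1)
  (s2 : 'I_n2 -> 'I_k2) (t2 : 'I_n3 -> 'I_k2)
  (phi : transf F1 F2 s1 t1) (psi : transf F2 F3 s2 t2).

Notation isin := (is_input a1 a2 a3 s1 t1 s2 t2).
Notation isout := (is_output a1 a2 a3 s1 t1 s2 t2).
Notation LM := (labelled_marking a1 a2 a3 s1 t1 s2 t2).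

Definition x1of (M : place n1 n2 n3 -> bool) (L : transition k1 k2 -> lab) (f : mor B) :=
  fun j : 'I_n1 => if M (inl j) then f else idm (labobj f (L (inl (s1 j)))).
Definition x2of (M : place n1 n2 n3 -> bool) (L : transition k1 k2 -> lab) (f : mor B) :=
  fun j : 'I_n2 => if M (inr (inl j)) then f else idm (labobj f (L (inl (t1 j)))).
Definition x3of (M : place n1 n2 n3 -> bool) (L : transition k1 k2 -> lab) (f : mor B) :=
  fun j : 'I_n3 => if M (inr (inr j)) then f else idm (labobj f (L (inr (t2 j)))).
Definition X1of (L : transition k1 k2 -> lab) (f : mor B) := fun i : 'I_k1 => labobj f (L (inl i)).
Definition X2of (L : transition k1 k2 -> lab) (f : mor B) := fun i : 'I_k2 => labobj f (L (inr i)).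

Lemma mor_ofE M L f : mor_of phi psi M L f =
  cmp (fm F3 (x3of M L f)) (cmp (psi (X2of L f)) (cmp (fm F2 (x2of M L f))
     (cmp (phi (X1of L f)) (fm F1 (x1of M L f))))).
Proof. by []. Qed.

Section LMs.
Variables (M : place n1 n2 n3 -> bool) (L : transition k1 k2 -> lab) (f : mor B).
Hypothesis HML : LM M L.

Lemma c1 j : (if a1 j then cod (x1of M L f j) else dom (x1of M L f j)) = X1of L f (s1 j).
Proof.
rewrite /x1of /X1of; have := HML (inl j); case: (M (inl j)) => [[Ho Hi]|Hz].
  case Ea: (a1 j).
    by rewrite (Hi (inl (s1 j))) // /is_input eqxx Ea.
  by rewrite (Ho (inl (s1 j))) // /is_output eqxx Ea.
by case: (a1 j); rewrite ?cod_idm ?dom_idm.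
Qed.

Lemma c2 j : (if a2 j then dom (x2of M L f j) else cod (x2of M L f j)) = X1of L f (t1 j).
Proof.
rewrite /x2of /X1of; have := HML (inr (inl j)); case: (M _) => [[Ho Hi]|Hz].
  case Ea: (a2 j).
    by rewrite (Ho (inl (t1 j))) // /is_output eqxx Ea.
  by rewrite (Hi (inl (t1 j))) // /is_input eqxx Ea.
by case: (a2 j); rewrite ?cod_idm ?dom_idm.
Qed.

Lemma c3 j : (if a2 j then cod (x2of M L f j) else dom (x2of M L f j)) = X2of L f (s2 j).
Proof.
rewrite /x2of /X2of; have := HML (inr (inl j)); case: (M _) => [[Ho Hi]|Hz].
  case Ea: (a2 j).
    by rewrite (Hi (inr (s2 j))) // /is_input eqxx Ea.
  by rewrite (Ho (inr (s2 j))) // /is_output eqxx Ea.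
rewrite (Hz (inl (t1 j)) (inr (s2 j))); last first.
  by rewrite /is_input /is_output !eqxx; case: (a2 j).
  by rewrite /is_input /is_output !eqxx; case: (a2 j).
by case: (a2 j); rewrite ?cod_idm ?dom_idm.
Qed.

Lemma c4 j : (if a3 j then dom (x3of M L f j) else cod (x3of M L f j)) = X2of L f (t2 j).
Proof.
rewrite /x3of /X2of; have := HML (inr (inr j)); case: (M _) => [[Ho Hi]|Hz].
  case Ea: (a3 j).
    by rewrite (Ho (inr (t2 j))) // /is_output eqxx Ea.
  by rewrite (Hi (inr (t2 j))) // /is_input eqxx Ea.
by case: (a3 j); rewrite ?cod_idm ?dom_idm.
Qed.

Lemma mor_ofE2 : mor_of phi psi M L f =
  cmp (cmp (fm F3 (x3of M L f)) (cmp (psi (X2of L f)) (fm F2 (x2of M L f))))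
     (cmp (phi (X1of L f)) (fm F1 (x1of M L f))).
Proof.
have e1 : cod (fm F1 (x1of M L f)) = dom (phi (X1of L f)).
  rewrite fm_cod tcomp_dom; congr fo; apply: functional_extensionality => j; exact: c1.
have e2 : cod (phi (X1of L f)) = dom (fm F2 (x2of M L f)).
  rewrite fm_dom tcomp_cod; congr fo; apply: functional_extensionality => j; exact/esym/c2.
have e3 : cod (fm F2 (x2of M L f)) = dom (psi (X2of L f)).
  rewrite fm_cod tcomp_dom; congr fo; apply: functional_extensionality => j; exact: c3.
have e4 : cod (psi (X2of L f)) = dom (fm F3 (x3of M L f)).
  rewrite fm_dom tcomp_cod; congr fo; apply: functional_extensionality => j; exact/esym/c4.
have eR : cod (cmp (phi (X1of L f)) (fm F1 (x1of M L f))) = dom (fm F2 (x2of M L f)).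
  by rewrite cod_cmp.
rewrite mor_ofE (cmp_assoc eR e3) cmp_assoc //; first by rewrite dom_cmp.
by rewrite cod_cmp.
Qed.
End LMs.

Lemma input_uniq p s s' : isin p s -> isin p s' -> s = s'.
Proof.
case: p => [j|[j|j]]; case: s => s; case: s' => s'; rewrite /is_input //=;
move=> /andP[/eqP <- h1] /andP[/eqP <- h2] //; by move: h1 h2; case: (a2 j).
Qed.

Lemma output_uniq p s s' : isout p s -> isout p s' -> s = s'.
Proof.
case: p => [j|[j|j]]; case: s => s; case: s' => s'; rewrite /is_output //=;
move=> /andP[/eqP <- h1] /andP[/eqP <- h2] //; by move: h1 h2; case: (a2 j).
Qed.

End G2.

Unset Implicit Arguments.

Theorem mainTheorem7 (B C : Cat) (n1 n2 n3 k1 k2 : nat)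
  (a1 : 'I_n1 -> bool) (a2 : 'I_n2 -> bool) (a3 : 'I_n3 -> bool)
  (F1 : mfunctor B C a1) (F2 : mfunctor B C a2) (F3 : mfunctor B C a3)
  (s1 : 'I_n1 -> 'I_k1) (t1 : 'I_n2 -> 'I_k1)
  (s2 : 'I_n2 -> 'I_k2) (t2 : 'I_n3 -> 'I_k2)
  (phi : transf F1 F2 s1 t1) (psi : transf F2 F3 s2 t2)
  (Hphi : forall i, dinatural phi i) (Hpsi : forall i, dinatural psi i)
  (M : place n1 n2 n3 -> bool) (L : transition k1 k2 -> lab) (f : mor B)
  (HML : labelled_marking a1 a2 a3 s1 t1 s2 t2 M L)
  (t : transition k1 k2)
  (Hpre : forall p, is_input a1 a2 a3 s1 t1 s2 t2 p t -> M p = true)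
  (Ht : L t = LB) :
  labelled_marking a1 a2 a3 s1 t1 s2 t2
    (fire_marking a1 a2 a3 s1 t1 s2 t2 M t) (fire_label L t) /\
  mor_of phi psi M L f
  = mor_of phi psi (fire_marking a1 a2 a3 s1 t1 s2 t2 M t) (fire_label L t) f.
Proof.
have Hout : forall p, is_output a1 a2 a3 s1 t1 s2 t2 p t -> M p = false.
  move=> p Hp; have := HML p; case: (M p) => // [[Ho _]].
  by rewrite (Ho t Hp) in Ht.
have HLM' : labelled_marking a1 a2 a3 s1 t1 s2 t2
    (fire_marking a1 a2 a3 s1 t1 s2 t2 M t) (fire_label L t).
  move=> p; rewrite /fire_marking.
  case Hin: (is_input _ _ _ _ _ _ _ p t).
    have allA : forall s, is_input a1 a2 a3 s1 t1 s2 t2 p s ||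
        is_output a1 a2 a3 s1 t1 s2 t2 p s -> fire_label L t s = LA.
      move=> s Hs; rewrite /fire_label; case: eqP => // Ne.
      case/orP: Hs => Hs; first by case: Ne; exact: (input_uniq Hs Hin).
      have := HML p; rewrite (Hpre p Hin) => -[Ho _]; exact: Ho.
    by move=> s s' Hs Hs'; rewrite !allA.
  case Ho: (is_output _ _ _ _ _ _ _ p t).
    split.
      move=> s Hs; rewrite /fire_label (output_uniq Hs Ho); by rewrite eqxx.
    move=> s Hs; rewrite /fire_label; case: eqP => [E|_].
      by rewrite E Hin in Hs.
    have := HML p; rewrite (Hout p Ho) => Hz.
    by rewrite (Hz s t) ?Hs ?Ho ?orbT.
  have Nt : forall s, is_input a1 a2 a3 s1 t1 s2 t2 p s ||
        is_output a1 a2 a3 s1 t1 s2 t2 p s -> fire_label L t s = L s.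
    move=> s Hs; rewrite /fire_label; case: eqP => // E.
    by rewrite E Hin Ho in Hs.
  have := HML p; case: (M p) => [[H1 H2]|Hz].
    split=> s Hs.
      by rewrite Nt ?Hs ?orbT //; exact: H1.
    by rewrite Nt ?Hs ?orbT //; exact: H2.
  move=> s s' Hs Hs'; rewrite !Nt //; exact: Hz.
split=> //.
case: t Ht Hpre Hout HLM' => i Ht Hpre Hout HLM'.
  rewrite !mor_ofE.
  have EX2 : X2of (fire_label L (inl i)) f = X2of L f by [].
  have Ex3 : x3of t2 (fire_marking a1 a2 a3 s1 t1 s2 t2 M (inl i)) (fire_label L (inl i)) f
            = x3of t2 M L f by [].
  have EX1 : X1of (fire_label L (inl i)) f = subst_ob (X1of L f) i (dom f).
    apply: functional_extensionality => l; rewrite /X1of /fire_label /subst_ob /=.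
    have -> : (inl l == inl i :> transition k1 k2) = (l == i) by [].
    by case: eqP.
  rewrite EX2 Ex3 EX1; congr (cmp _ (cmp _ _)).
  apply: (dinat_step (Hphi i)).
  by rewrite /X1of Ht.
  exact: (c1 f HML).
  exact: (c2 f HML).
  move=> j Ne; rewrite /x1of /fire_marking /fire_label /is_input /is_output /=.
    by rewrite inl_eq (negbTE Ne).
  move=> j Ne; rewrite /x2of /fire_marking /fire_label /is_input /is_output /=.
    by rewrite inl_eq (negbTE Ne).
  move=> j E; rewrite /x1of /fire_marking /fire_label /is_input /is_output /=.
    rewrite inl_eq E eqxx; case Ea: (a1 j) => /=.
      by rewrite Hpre /is_input ?E ?eqxx ?Ea.
    by rewrite Hout /is_output ?E ?eqxx ?Ea //= Ht.
  move=> j E; rewrite /x2of /fire_marking /fire_label /is_input /is_output /=.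
    rewrite inl_eq E eqxx; case Ea: (a2 j) => /=.
      by rewrite Hout /is_output ?E ?eqxx ?Ea //= Ht.
    by rewrite Hpre /is_input ?E ?eqxx ?Ea.
  rewrite (mor_ofE2 phi psi f HML) (mor_ofE2 phi psi f HLM').
  have Ex1 : x1of s1 (fire_marking a1 a2 a3 s1 t1 s2 t2 M (inr i)) (fire_label L (inr i)) f
            = x1of s1 M L f by [].
  have EX1 : X1of (fire_label L (inr i)) f = X1of L f by [].
  have EX2 : X2of (fire_label L (inr i)) f = subst_ob (X2of L f) i (dom f).
    apply: functional_extensionality => l; rewrite /X2of /fire_label /subst_ob inr_eq.
    by case: eqP.
  rewrite Ex1 EX1 EX2; congr (cmp _ _).
  apply: (dinat_step (Hpsi i)).
  by rewrite /X2of Ht.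
  exact: (c3 f HML).
  exact: (c4 f HML).
  move=> j Ne; rewrite /x2of /fire_marking /fire_label /is_input /is_output /=.
    by rewrite ?inlr_eq (negbTE Ne).
  move=> j Ne; rewrite /x3of /fire_marking /fire_label /is_input /is_output /=.
    by rewrite ?inr_eq (negbTE Ne).
  move=> j E; rewrite /x2of /fire_marking /fire_label /is_input /is_output /=.
    rewrite ?inlr_eq E eqxx; case Ea: (a2 j) => /=.
      have HM : M (inr (inl j)) = true by apply: Hpre; rewrite /is_input E eqxx Ea.
      have := HML (inr (inl j)); rewrite HM => -[Ho _].
      rewrite (Ho (inl (t1 j))) //; by rewrite /is_output eqxx Ea.
    have HM : M (inr (inl j)) = false by apply: Hout; rewrite /is_output E eqxx Ea.
    have := HML (inr (inl j)); rewrite HM => Hz.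
    rewrite (Hz (inl (t1 j)) (inr i)) ?Ht //.
      by rewrite /is_input /is_output eqxx Ea.
    by rewrite /is_input /is_output E eqxx Ea orbT.
  move=> j E; rewrite /x3of /fire_marking /fire_label /is_input /is_output /=.
    rewrite ?inr_eq E eqxx; case Ea: (a3 j) => /=.
      have HM : M (inr (inr j)) = false by apply: Hout; rewrite /is_output E eqxx Ea.
      by rewrite HM Ht.
    have HM : M (inr (inr j)) = true by apply: Hpre; rewrite /is_input E eqxx Ea.
    by rewrite HM.
Qed.
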